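(* Let $k>1$ be a square-free natural number and let $\mathfrak{n}^{\mathbb{Q}}_k$ be the rational Lie algebra with basis $X_1,X_2,X_3,X_4,Z_1,Z_2$ and nonzero brackets (up to antisymmetry) $[X_1,X_3]=Z_1$, $[X_1,X_4]=Z_2$, $[X_2,X_3]=kZ_2$, $[X_2,X_4]=Z_1$. Then there exists an Anosov automorphism $f$ of $\mathfrak{n}^{\mathbb{Q}}_k$ with signature $\{2,4\}$.
   Context: An automorphism of a rational Lie algebra is Anosov if it is hyperbolic (no eigenvalue of absolute value $1$) and integer-like (characteristic polynomial with integer coefficients and determinant $\pm1$). The signature of such an automorphism is the set $\{p,q\}$ where $p$ is the number of eigenvalues (with multiplicity) of absolute value $<1$ and $q$ the number of absolute value $>1$. *)

(* Defs.v *)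
From HB Require Import structures.
From mathcomp Require Import all_boot all_order all_algebra all_field.
Set Implicit Arguments. Unset Strict Implicit. Unset Printing Implicit Defensive.
Import Order.TTheory GRing.Theory Num.Theory.
Local Open Scope ring_scope.

(* Vectors of Q^6 are row vectors 'rV[rat]_6, in coordinates w.r.t. the basis
   X1, X2, X3, X4, Z1, Z2 (indices 0,1,2,3,4,5). *)
Definition e6 (i : nat) : 'rV[rat]_6 := delta_mx 0 (inord i).

Definition nk_basis_bracket (k : nat) (i j : 'I_6) : 'rV[rat]_6 :=
  let isij (a b : nat) := ((val i == a) && (val j == b))%N in
  if isij 0 2 then e6 4
  else if isij 2 0 then - e6 4
  else if isij 0 3 then e6 5
  else if isij 3 0 then - e6 5
  else if isij 1 2 then k%:R *: e6 5
  else if isij 2 1 then - (k%:R *: e6 5)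
  else if isij 1 3 then e6 4
  else if isij 3 1 then - e6 4
  else 0.

Definition nk_bracket (k : nat) (u v : 'rV[rat]_6) : 'rV[rat]_6 :=
  \sum_(i < 6) \sum_(j < 6) (u 0 i * v 0 j) *: nk_basis_bracket k i j.

Definition is_nk_automorphism (k : nat) (A : 'M[rat]_6) : Prop :=
  A \in unitmx /\
  forall u v : 'rV[rat]_6, nk_bracket k (u *m A) (v *m A) = nk_bracket k u v *m A.

Definition eigenvalues (n : nat) (A : 'M[rat]_n) : seq algC :=
  sval (closed_field_poly_normal (map_poly (ratr : rat -> algC) (char_poly A))).

Definition hyperbolic (n : nat) (A : 'M[rat]_n) : Prop :=
  forall z : algC, z \in eigenvalues A -> `|z| != 1.

Definition integer_like (n : nat) (A : 'M[rat]_n) : Prop :=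
  char_poly A \is a polyOver Num.int /\ (\det A = 1 \/ \det A = -1).

Definition anosov (n : nat) (A : 'M[rat]_n) : Prop :=
  hyperbolic A /\ integer_like A.

Definition n_contracting (n : nat) (A : 'M[rat]_n) : nat :=
  count (fun z : algC => `|z| < 1) (eigenvalues A).
Definition n_expanding (n : nat) (A : 'M[rat]_n) : nat :=
  count (fun z : algC => 1 < `|z|) (eigenvalues A).

Definition has_signature (n : nat) (A : 'M[rat]_n) (p q : nat) : Prop :=
  (n_contracting A = p /\ n_expanding A = q) \/
  (n_contracting A = q /\ n_expanding A = p).

Definition squarefree (k : nat) : Prop :=
  forall p : nat, prime p -> ~~ (p * p %| k)%N.

(* Main.v *)
Require Import Defs.
From Stdlib Require ZArith Reals Lia Lra Psatz List Classical.
Module PellM.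
Import ZArith Reals Lia Lra Psatz List Classical.
Local Open Scope Z_scope.

Lemma pigeon (A B : Type) (f : A -> B) (l : list A) (r : list B) :
  NoDup l -> (forall x, In x l -> In (f x) r) -> (length r < length l)%nat ->
  exists x y, In x l /\ In y l /\ x <> y /\ f x = f y.
Proof.
intros Hl Hin Hlen.
apply NNPP; intro H.
assert (Hnd : NoDup (map f l)).
{ apply NoDup_map_NoDup_ForallPairs; auto.
  intros x y Hx Hy Hf. apply NNPP; intro Hne. apply H. exists x, y; auto. }
assert (Hinc : incl (map f l) r).
{ intros b Hb. apply in_map_iff in Hb. destruct Hb as [x [<- Hx]]. auto. }
pose proof (NoDup_incl_length Hnd Hinc). rewrite length_map in H0. lia.
Qed.

Definition zrange (lo : Z) (n : nat) : list Z :=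
  map (fun i => lo + Z.of_nat i) (seq 0 n).

Lemma in_zrange lo n x : lo <= x < lo + Z.of_nat n -> In x (zrange lo n).
Proof.
intros H. unfold zrange. apply in_map_iff. exists (Z.to_nat (x - lo)).
split; [lia|]. apply in_seq. lia.
Qed.

Lemma length_zrange lo n : length (zrange lo n) = n.
Proof. unfold zrange. now rewrite length_map, length_seq. Qed.

Local Open Scope R_scope.

Lemma floor_sqrt (n : Z) : (0 <= n)%Z ->
  IZR (Z.sqrt n) <= sqrt (IZR n) < IZR (Z.sqrt n) + 1.
Proof.
intros Hn. destruct (Z.sqrt_spec n Hn) as [H1 H2].
pose proof (Z.sqrt_nonneg n) as Hs.
set (s := Z.sqrt n) in *.
split.
- rewrite <- (sqrt_square (IZR s)) by (apply IZR_le; lia).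
  apply sqrt_le_1_alt. rewrite <- mult_IZR. apply IZR_le; lia.
- replace (IZR s + 1) with (IZR (Z.succ s)) by (rewrite succ_IZR; ring).
  rewrite <- (sqrt_square (IZR (Z.succ s))) by (apply IZR_le; lia).
  apply sqrt_lt_1_alt. split. apply IZR_le; lia.
  rewrite <- mult_IZR. apply IZR_lt; lia.
Qed.

Lemma sqrt_mul_sq (k j : Z) : (0 <= k)%Z -> (0 <= j)%Z ->
  sqrt (IZR (k * (j * j))) = IZR j * sqrt (IZR k).
Proof.
intros Hk Hj. rewrite mult_IZR, sqrt_mult_alt by (apply IZR_le; lia).
rewrite mult_IZR, sqrt_square by (apply IZR_le; lia). ring.
Qed.

Lemma floor_mul (k j : Z) : (0 <= k)%Z -> (0 <= j)%Z ->
  IZR (Z.sqrt (k * (j * j))) <= IZR j * sqrt (IZR k) < IZR (Z.sqrt (k * (j * j))) + 1.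
Proof.
intros Hk Hj. rewrite <- sqrt_mul_sq by auto. apply floor_sqrt. nia.
Qed.

Lemma dirichlet (k N : Z) : (1 <= k)%Z -> (1 <= N)%Z ->
  exists p q, (1 <= q <= N)%Z /\ Rabs (IZR N * (IZR q * sqrt (IZR k) - IZR p)) < 1.
Proof.
intros Hk HN.
set (t := sqrt (IZR k)).
set (a := fun j : Z => Z.sqrt (k * (j * j))).
set (b := fun j : Z => Z.sqrt (k * ((N * j) * (N * j)))).
set (c := fun j : nat => (b (Z.of_nat j) - N * a (Z.of_nat j))%Z).
assert (Fa : forall j, (0 <= j)%Z -> IZR (a j) <= IZR j * t < IZR (a j) + 1).
{ intros j Hj. apply floor_mul; lia. }
assert (Fb : forall j, (0 <= j)%Z -> IZR (b j) <= IZR N * IZR j * t < IZR (b j) + 1).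
{ intros j Hj. rewrite <- mult_IZR. apply floor_mul; lia. }
assert (Hc : forall j, (0 <= c j < N)%Z).
{ intros j. unfold c. pose proof (Fa (Z.of_nat j) ltac:(lia)) as [A1 A2].
  pose proof (Fb (Z.of_nat j) ltac:(lia)) as [B1 B2].
  assert (HN' : 1 <= IZR N) by (apply IZR_le; lia).
  split.
  - assert (IZR (N * a (Z.of_nat j)) < IZR (b (Z.of_nat j) + 1)).
    { rewrite mult_IZR, plus_IZR. nra. }
    apply lt_IZR in H. lia.
  - assert (IZR (b (Z.of_nat j)) < IZR (N * a (Z.of_nat j) + N)).
    { rewrite plus_IZR, mult_IZR. nra. }
    apply lt_IZR in H. lia. }
destruct (pigeon _ _ c (seq 0 (S (Z.to_nat N))) (zrange 0 (Z.to_nat N)))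
  as [x [y [Hx [Hy [Hxy Hcxy]]]]].
- apply seq_NoDup.
- intros j _. apply in_zrange. specialize (Hc j). lia.
- rewrite length_zrange, length_seq. lia.
- apply in_seq in Hx. apply in_seq in Hy.
  assert (Key : forall x y : nat, (x < y)%nat -> (y <= Z.to_nat N)%nat -> c x = c y ->
     exists p q, (1 <= q <= N)%Z /\ Rabs (IZR N * (IZR q * t - IZR p)) < 1).
  { clear x y Hx Hy Hxy Hcxy. intros x y Hxy Hy Hcxy.
    exists (a (Z.of_nat y) - a (Z.of_nat x))%Z, (Z.of_nat y - Z.of_nat x)%Z.
    split; [lia|].
    pose proof (Fb (Z.of_nat x) ltac:(lia)) as [B1 B2].
    pose proof (Fb (Z.of_nat y) ltac:(lia)) as [B3 B4].
    unfold c in Hcxy.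
    assert (E : IZR (b (Z.of_nat y)) - IZR (b (Z.of_nat x)) =
                IZR N * (IZR (a (Z.of_nat y)) - IZR (a (Z.of_nat x)))).
    { rewrite <- !minus_IZR, <- mult_IZR. apply IZR_eq. lia. }
    rewrite !minus_IZR. apply Rabs_def1; nra. }
  destruct (Nat.lt_total x y) as [H|[H|H]].
  + apply (Key x y); lia.
  + contradiction.
  + apply (Key y x); lia.
Qed.

Lemma bound (k N p q : Z) : (1 <= k)%Z -> (1 <= q <= N)%Z ->
  Rabs (IZR N * (IZR q * sqrt (IZR k) - IZR p)) < 1 ->
  (- (2 * k) <= p * p - k * (q * q) <= 2 * k)%Z.
Proof.
intros Hk Hq H.
set (t := sqrt (IZR k)) in *.
assert (Ht2 : t * t = IZR k) by (apply sqrt_sqrt; apply IZR_le; lia).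
assert (Ht0 : 0 <= t) by apply sqrt_pos.
assert (Hk1 : 1 <= IZR k) by (apply IZR_le; lia).
assert (Hq1 : 1 <= IZR q) by (apply IZR_le; lia).
assert (HqN : IZR q <= IZR N) by (apply IZR_le; lia).
set (e := IZR q * t - IZR p) in *.
apply Rabs_def2 in H. destruct H as [H1 H2].
assert (Hu : - 1 < IZR q * e < 1).
{ split; destruct (Rle_lt_dec 0 e); nra. }
assert (He : - 1 < e < 1) by (split; nra).
assert (Htk : t <= IZR k) by nra.
assert (V : IZR (p * p - k * (q * q)) = e * e - 2 * t * (IZR q * e)).
{ rewrite minus_IZR, !mult_IZR. unfold e. rewrite <- Ht2. generalize t (IZR p) (IZR q). intros. ring. }
assert (IZR (- (2 * k) - 1) < IZR (p * p - k * (q * q)) < IZR (2 * k + 1)).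
{ rewrite V, minus_IZR, plus_IZR, opp_IZR, !mult_IZR. split; nra. }
destruct H as [L R]. apply lt_IZR in L. apply lt_IZR in R. lia.
Qed.

Lemma irrat (k p q : Z) : (1 <= k)%Z -> (q <> 0)%Z ->
  (forall p q : Z, q <> 0%Z -> (p * p <> k * (q * q))%Z) ->
  0 < Rabs (IZR q * sqrt (IZR k) - IZR p).
Proof.
intros Hk Hq Hns. apply Rabs_pos_lt. intro E.
assert (IZR (p * p) = IZR (k * (q * q))).
{ rewrite !mult_IZR. replace (IZR p) with (IZR q * sqrt (IZR k)) by lra.
  assert (Hs : sqrt (IZR k) * sqrt (IZR k) = IZR k)
    by (apply sqrt_sqrt; apply IZR_le; lia).
  generalize Hs. generalize (sqrt (IZR k)). intros s Hs'. rewrite <- Hs'. ring. }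
apply eq_IZR in H. eapply Hns; eauto.
Qed.

Lemma fmin (l : list R) : (forall r, In r l -> 0 < r) ->
  0 < fold_right Rmin 1 l /\ forall r, In r l -> fold_right Rmin 1 l <= r.
Proof.
induction l as [|x l IH]; intros H; simpl.
- split; [lra| tauto].
- destruct IH as [IH1 IH2]. { intros r Hr; apply H; simpl; auto. }
  split.
  + apply Rmin_glb_lt; auto. apply H; simpl; auto.
  + intros r [<-|Hr]. apply Rmin_l. eapply Rle_trans. apply Rmin_r. auto.
Qed.

Definition good (k : Z) (x : Z * Z) :=
  (1 <= snd x)%Z /\ (- (2 * k) <= fst x * fst x - k * (snd x * snd x) <= 2 * k)%Z.

Lemma many (k : Z) : (1 <= k)%Z ->
  (forall p q : Z, q <> 0%Z -> (p * p <> k * (q * q))%Z) ->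
  forall n : nat, exists L : list (Z * Z), NoDup L /\ length L = n /\
    forall x, In x L -> good k x.
Proof.
intros Hk Hns n. induction n as [|n IH].
- exists nil. split; [constructor|]. split; [reflexivity|]. simpl; tauto.
- destruct IH as [L [HL [Hlen Hg]]].
  set (dist := fun x : Z * Z => Rabs (IZR (snd x) * sqrt (IZR k) - IZR (fst x))).
  destruct (fmin (map dist L)) as [Hd0 Hd].
  { intros r Hr. apply in_map_iff in Hr. destruct Hr as [x [<- Hx]].
    apply irrat; auto. destruct (Hg x Hx). lia. }
  set (d := fold_right Rmin 1 (map dist L)) in *.
  set (N := Z.max 1 (up (/ d))).
  assert (HN : (1 <= N)%Z) by lia.
  assert (HNd : / d < IZR N).
  { destruct (archimed (/ d)) as [A _]. eapply Rlt_le_trans. apply A.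
    apply IZR_le. lia. }
  destruct (dirichlet k N Hk HN) as [p [q [Hq Hpq]]].
  exists ((p, q) :: L). split; [|split].
  + constructor; auto. intro Hin.
    assert (Hle : d <= dist (p, q)) by (apply Hd; apply in_map; auto).
    unfold dist in Hle; simpl in Hle.
    rewrite Rabs_mult, (Rabs_right (IZR N)) in Hpq
      by (apply Rle_ge; apply IZR_le; lia).
    assert (1 < IZR N * d).
    { apply (Rmult_lt_compat_r d) in HNd; auto. rewrite Rinv_l in HNd; lra. }
    assert (0 < IZR N) by (apply IZR_lt; lia).
    nra.
  + simpl; lia.
  + intros x [<-|Hx]; auto. split; simpl. lia. eapply bound; eauto.
Qed.

Local Open Scope Z_scope.

Lemma mod_in (a m B : Z) : m <> 0 -> - B <= m <= B ->
  In (a mod m) (zrange (- B) (Z.to_nat (2 * B + 1))).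
Proof.
intros Hm HB. apply in_zrange.
destruct (Z_lt_le_dec 0 m).
- pose proof (Z.mod_pos_bound a m l). lia.
- pose proof (Z.mod_neg_bound a m ltac:(lia)). lia.
Qed.

Lemma pell (k : Z) : 1 <= k ->
  (forall p q : Z, q <> 0 -> p * p <> k * (q * q)) ->
  exists x y, x * x - k * (y * y) = 1 /\ y <> 0.
Proof.
intros Hk Hns.
set (B := 2 * k).
set (Rl := zrange (- B) (Z.to_nat (2 * B + 1))).
set (r := list_prod (list_prod Rl Rl) Rl).
set (cls := fun x : Z * Z => let m := fst x * fst x - k * (snd x * snd x) in
             (m, fst x mod m, snd x mod m)).
destruct (many k Hk Hns (S (length r))) as [L [HL [Hlen Hg]]].
destruct (pigeon _ _ cls L r HL) as [[p1 q1] [[p2 q2] [H1 [H2 [Hne Hc]]]]].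
- intros [p q] Hx. destruct (Hg _ Hx) as [Hq Hm]. cbn [fst snd] in Hq, Hm.
  assert (Hm0 : p * p - k * (q * q) <> 0).
  { intro E. apply (Hns p q); lia. }
  unfold cls, r; cbn [fst snd]. apply in_prod_iff. split; [apply in_prod_iff; split|].
  + apply in_zrange. unfold B in *. rewrite Z2Nat.id by lia. lia.
  + apply mod_in; auto.
  + apply mod_in; auto.
- lia.
- destruct (Hg _ H1) as [Hq1 _]. destruct (Hg _ H2) as [Hq2 _]. cbn [fst snd] in *.
  unfold cls in Hc; cbn [fst snd] in Hc. injection Hc as Em Ep Eq.
  set (m := p1 * p1 - k * (q1 * q1)) in *.
  assert (Hm0 : m <> 0) by (intro E; apply (Hns p1 q1); lia).
  rewrite <- Em in Ep, Eq.
  pose proof (Z.div_mod p1 m Hm0) as D1. pose proof (Z.div_mod p2 m Hm0) as D2.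
  pose proof (Z.div_mod q1 m Hm0) as D3. pose proof (Z.div_mod q2 m Hm0) as D4.
  set (a := p2 / m - p1 / m). set (b := q2 / m - q1 / m).
  assert (Ep2 : p2 = p1 + m * a) by (unfold a; lia).
  assert (Eq2 : q2 = q1 + m * b) by (unfold b; lia).
  clearbody a b. clear D1 D2 D3 D4 Ep Eq.
  set (X := 1 + p1 * a - k * q1 * b). set (Y := p1 * b - a * q1).
  assert (EX : m * X = p1 * p2 - k * q1 * q2) by (unfold X, m; subst p2 q2; nia).
  assert (EY : m * Y = p1 * q2 - p2 * q1) by (unfold Y; subst p2 q2; nia).
  assert (Brah : (p1 * p2 - k * q1 * q2) * (p1 * p2 - k * q1 * q2)
                 - k * ((p1 * q2 - p2 * q1) * (p1 * q2 - p2 * q1))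
               = (p1 * p1 - k * (q1 * q1)) * (p2 * p2 - k * (q2 * q2))) by ring.
  fold m in Brah. rewrite <- Em in Brah. rewrite <- EX, <- EY in Brah.
  exists X, Y. split.
  + apply (Z.mul_reg_l _ _ (m * m)). nia. nia.
  + intro HY. rewrite HY in EY. apply Hne.
    assert (E1 : p1 * q2 = p2 * q1) by lia.
    assert (E2 : (q2 * q2 - q1 * q1) * m = (p1 * q2) * (p1 * q2) - (p2 * q1) * (p2 * q1)).
    { transitivity (q2 * q2 * (p1 * p1 - k * (q1 * q1)) - q1 * q1 * (p2 * p2 - k * (q2 * q2))).
      - rewrite <- Em. unfold m. ring.
      - ring. }
    rewrite E1 in E2.
    assert (E3 : (q2 - q1) * (q2 + q1) * m = 0) by (transitivity ((q2 * q2 - q1 * q1) * m); [ring| rewrite E2; ring]).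
    apply Z.mul_eq_0 in E3. destruct E3 as [E3|E3]; [|contradiction].
    apply Z.mul_eq_0 in E3. destruct E3 as [E3|E3]; [|lia].
    assert (Hqq : q2 = q1) by lia. rewrite Hqq in E1.
    assert (Hpp : p1 = p2). { apply (Z.mul_reg_r _ _ q1). lia. exact E1. }
    rewrite Hqq, Hpp. reflexivity.
Qed.

Lemma pell_nat (k : nat) : (1 <= k)%nat ->
  (forall p q : nat, q <> 0%nat -> (p * p <> k * (q * q))%nat) ->
  exists x y : nat, (x * x = k * (y * y) + 1)%nat /\ y <> 0%nat.
Proof.
intros Hk Hns.
destruct (pell (Z.of_nat k)) as [X [Y [HXY HY]]].
- lia.
- intros p q Hq E. apply (Hns (Z.abs_nat p) (Z.abs_nat q)); [lia|].
  apply Nat2Z.inj. rewrite !Nat2Z.inj_mul, !Nat2Z.inj_abs_nat.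
  rewrite <- !Z.abs_mul, E, !Z.abs_mul, (Z.abs_eq (Z.of_nat k)) by lia. reflexivity.
- exists (Z.abs_nat X), (Z.abs_nat Y). split; [|lia].
  apply Nat2Z.inj. rewrite Nat2Z.inj_add, !Nat2Z.inj_mul, !Nat2Z.inj_abs_nat.
  rewrite <- !Z.abs_mul, !(Z.abs_eq (_ * _)) by nia. lia.
Qed.
End PellM.
From HB Require Import structures.
From mathcomp Require Import all_boot all_order all_algebra all_field.
From mathcomp Require Import ring zify.
Import Order.TTheory GRing.Theory Num.Theory.
Local Open Scope ring_scope.

Notation o6 n := (@Ordinal 6 n isT).

Lemma sum6 (R : nmodType) (F : 'I_6 -> R) :
  \sum_(i < 6) F i = F (o6 0) + F (o6 1) + F (o6 2) + F (o6 3) + F (o6 4) + F (o6 5).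
Proof.
rewrite !big_ord_recl big_ord0 addr0 /= !addrA.
by congr (_ + _ + _ + _ + _ + _); congr F; apply/val_inj.
Qed.

Lemma sum66 (R : nmodType) (F : 'I_6 -> 'I_6 -> R) :
  \sum_(i < 6) \sum_(j < 6) F i j =
  (F (o6 0) (o6 0) + F (o6 0) (o6 1) + F (o6 0) (o6 2) + F (o6 0) (o6 3) + F (o6 0) (o6 4) + F (o6 0) (o6 5)) +
  (F (o6 1) (o6 0) + F (o6 1) (o6 1) + F (o6 1) (o6 2) + F (o6 1) (o6 3) + F (o6 1) (o6 4) + F (o6 1) (o6 5)) +
  (F (o6 2) (o6 0) + F (o6 2) (o6 1) + F (o6 2) (o6 2) + F (o6 2) (o6 3) + F (o6 2) (o6 4) + F (o6 2) (o6 5)) +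
  (F (o6 3) (o6 0) + F (o6 3) (o6 1) + F (o6 3) (o6 2) + F (o6 3) (o6 3) + F (o6 3) (o6 4) + F (o6 3) (o6 5)) +
  (F (o6 4) (o6 0) + F (o6 4) (o6 1) + F (o6 4) (o6 2) + F (o6 4) (o6 3) + F (o6 4) (o6 4) + F (o6 4) (o6 5)) +
  (F (o6 5) (o6 0) + F (o6 5) (o6 1) + F (o6 5) (o6 2) + F (o6 5) (o6 3) + F (o6 5) (o6 4) + F (o6 5) (o6 5)).
Proof. by rewrite sum6 !sum6. Qed.

Lemma e6E (n : nat) (l : 'I_6) : (n < 6)%N -> e6 n 0 l = ((val l == n)%N)%:R.
Proof. by move=> hn; rewrite /e6 mxE eqxx /= -val_eqE /= inordK. Qed.

Definition bb (k i j n : nat) : rat :=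
  if (i == 0) && (j == 2) then (n == 4)%:R
  else if (i == 2) && (j == 0) then - (n == 4)%:R
  else if (i == 0) && (j == 3) then (n == 5)%:R
  else if (i == 3) && (j == 0) then - (n == 5)%:R
  else if (i == 1) && (j == 2) then k%:R * (n == 5)%:R
  else if (i == 2) && (j == 1) then - (k%:R * (n == 5)%:R)
  else if (i == 1) && (j == 3) then (n == 4)%:R
  else if (i == 3) && (j == 1) then - (n == 4)%:R
  else 0.

Lemma nkbE k (i j : nat) (hi : (i < 6)%N) (hj : (j < 6)%N) (l : 'I_6) :
  nk_basis_bracket k (Ordinal hi) (Ordinal hj) 0 l = bb k i j l.
Proof.
rewrite /nk_basis_bracket /bb; cbv zeta => /=.
repeat case: ifP => _; rewrite ?(mxE, e6E) //.
all: by rewrite eqxx /= -val_eqE /= inordK.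
Qed.

Lemma scE (a : rat) (A : 'rV[rat]_6) l : (a *: A) 0 l = a * A 0 l.
Proof. by rewrite mxE. Qed.

Lemma nk_entry k u v l : nk_bracket k u v 0 l =
  \sum_(i < 6) \sum_(j < 6) (u 0 i * v 0 j) * nk_basis_bracket k i j 0 l.
Proof.
rewrite /nk_bracket summxE; apply: eq_bigr => i _.
rewrite summxE; apply: eq_bigr => j _; exact: scE.
Qed.

Lemma nkE k u v : nk_bracket k u v = \row_(l < 6)
  (if val l == 4%N then u 0 (o6 0) * v 0 (o6 2) - u 0 (o6 2) * v 0 (o6 0)
        + u 0 (o6 1) * v 0 (o6 3) - u 0 (o6 3) * v 0 (o6 1)
   else if val l == 5%N then u 0 (o6 0) * v 0 (o6 3) - u 0 (o6 3) * v 0 (o6 0)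
        + k%:R * (u 0 (o6 1) * v 0 (o6 2) - u 0 (o6 2) * v 0 (o6 1))
   else 0).
Proof.
apply/rowP => l. rewrite nk_entry mxE.
have := nkbE k; move: (nk_basis_bracket k) => B HB.
rewrite (@sum66 _ (fun i j => u 0 i * v 0 j * B i j 0 l)).
rewrite !HB.
rewrite /bb.
case: l => [[|[|[|[|[|[|l]]]]]] Hl] //=.
all: ring.
Qed.

Definition Mf (x y kk : rat) (a b : nat) : rat :=
  match a, b with
  | 0%N, 2%N => - y | 0%N, 3%N => - x
  | 1%N, 2%N => - x | 1%N, 3%N => - (kk * y)
  | 2%N, 1%N => 1 | 2%N, 2%N => 2
  | 3%N, 0%N => 1 | 3%N, 3%N => 2
  | _, _ => 0 end.

Definition Nf (x y kk : rat) (a b : nat) : rat :=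
  match a, b with
  | 0%N, 0%N => x | 0%N, 1%N => kk * y
  | 1%N, 0%N => y | 1%N, 1%N => x
  | _, _ => 0 end.

Definition Af (x y kk : rat) (a b : nat) : rat :=
  if ((a < 4) && (b < 4))%N then Mf x y kk a b
  else if ((4 <= a) && (4 <= b))%N then Nf x y kk (a - 4)%N (b - 4)%N else 0.

Definition Amx x y kk : 'M[rat]_(4 + 2) :=
  block_mx (\matrix_(i < 4, j < 4) Mf x y kk i j) 0 0 (\matrix_(i < 2, j < 2) Nf x y kk i j).

Lemma AE x y kk a b (ha : (a < 6)%N) (hb : (b < 6)%N) :
  Amx x y kk (Ordinal ha) (Ordinal hb) = Af x y kk a b.
Proof.
rewrite /Amx /Af !mxE.
case: (splitP (Ordinal ha : 'I_(4 + 2))) => i /= Hi; rewrite mxE;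
case: (splitP (Ordinal hb : 'I_(4 + 2))) => j /= Hj; rewrite ?mxE Hi Hj ?ltn_ord //=.
- by case: ifP => // /andP[H _]; have := ltn_ord i; lia.
- by case: ifP => // H; have := ltn_ord j; lia.
- by rewrite !addKn.
Qed.

Lemma aut_gen k x y (A : 'M[rat]_6) :
  (forall a b (ha : (a < 6)%N) (hb : (b < 6)%N), A (Ordinal ha) (Ordinal hb) = Af x y k%:R a b) ->
  forall u v, nk_bracket k (u *m A) (v *m A) = nk_bracket k u v *m A.
Proof.
move=> HA u v; rewrite !nkE; apply/rowP => l; rewrite !mxE.
rewrite !sum6 !HA.
case: l => [[|[|[|[|[|[|l]]]]]] Hl] //=; rewrite ?mxE /= ?HA /Af /= .
all: ring.
Qed.

Lemma minor0 (R : nzRingType) n (f : nat -> nat -> R) (j : 'I_n.+1) :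
  row' 0 (col' j (\matrix_(i < n.+1, l < n.+1) f i l)) =
  \matrix_(i < n, l < n) f i.+1 (bump j l).
Proof. by apply/matrixP => i l; rewrite !mxE /=. Qed.

Lemma det_expand (R : comNzRingType) n (f : nat -> nat -> R) :
  \det (\matrix_(i < n.+1, l < n.+1) f i l) =
  \sum_(j < n.+1) f 0%N j * ((-1) ^+ j * \det (\matrix_(i < n, l < n) f i.+1 (bump j l))).
Proof.
rewrite (expand_det_row _ 0); apply: eq_bigr => j _.
by rewrite /cofactor minor0 !mxE add0n.
Qed.

Lemma det1f (R : comNzRingType) (f : nat -> nat -> R) :
  \det (\matrix_(i < 1, l < 1) f i l) = f 0%N 0%N.
Proof. by rewrite det_mx11 mxE. Qed.

Lemma det2f (R : comNzRingType) (f : nat -> nat -> R) :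
  \det (\matrix_(i < 2, l < 2) f i l) = f 0%N 0%N * f 1%N 1%N - f 0%N 1%N * f 1%N 0%N.
Proof.
rewrite det_expand.
under eq_bigr => j _ do rewrite (@det1f _ (fun a b => f a.+1 (bump j b))).
rewrite !big_ord_recr big_ord0 /= /bump /=. ring.
Qed.

Lemma det3f (R : comNzRingType) (f : nat -> nat -> R) :
  \det (\matrix_(i < 3, l < 3) f i l) =
    f 0%N 0%N * (f 1%N 1%N * f 2%N 2%N - f 1%N 2%N * f 2%N 1%N)
  - f 0%N 1%N * (f 1%N 0%N * f 2%N 2%N - f 1%N 2%N * f 2%N 0%N)
  + f 0%N 2%N * (f 1%N 0%N * f 2%N 1%N - f 1%N 1%N * f 2%N 0%N).
Proof.
rewrite det_expand.
under eq_bigr => j _ do rewrite (@det2f _ (fun a b => f a.+1 (bump j b))).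
rewrite !big_ord_recr big_ord0 /= /bump /=. ring.
Qed.

Lemma det4f (R : comNzRingType) (f : nat -> nat -> R) :
  \det (\matrix_(i < 4, l < 4) f i l) =
  \sum_(j < 4) f 0%N j * ((-1) ^+ j *
    (f 1%N (bump j 0) * (f 2%N (bump j 1) * f 3%N (bump j 2) - f 2%N (bump j 2) * f 3%N (bump j 1))
  - f 1%N (bump j 1) * (f 2%N (bump j 0) * f 3%N (bump j 2) - f 2%N (bump j 2) * f 3%N (bump j 0))
  + f 1%N (bump j 2) * (f 2%N (bump j 0) * f 3%N (bump j 1) - f 2%N (bump j 1) * f 3%N (bump j 0)))).
Proof.
rewrite det_expand; apply: eq_bigr => j _.
by rewrite (@det3f _ (fun a b => f a.+1 (bump j b))).
Qed.

Lemma cpmx_eq n (f : nat -> nat -> rat) :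
  char_poly_mx (\matrix_(i < n, j < n) f i j) =
  \matrix_(i < n, j < n) ('X *+ (i == j :> nat) - (f i j)%:P).
Proof. by apply/matrixP => i j; rewrite !mxE. Qed.

Lemma charM x y kk :
  char_poly (\matrix_(i < 4, j < 4) Mf x y kk i j) =
  ('X^2 - 2 * 'X) ^+ 2 + (2 * x)%:P * ('X^2 - 2 * 'X) + (x ^+ 2 - kk * y ^+ 2)%:P.
Proof.
rewrite /char_poly cpmx_eq (@det4f _ (fun a b => 'X *+ (a == b)%N - (Mf x y kk a b)%:P)).
rewrite !big_ord_recr big_ord0 /= /bump /=.
ring.
Qed.

Lemma charN x y kk :
  char_poly (\matrix_(i < 2, j < 2) Nf x y kk i j) =
  'X^2 - (2 * x)%:P * 'X + (x ^+ 2 - kk * y ^+ 2)%:P.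
Proof.
rewrite /char_poly cpmx_eq (@det2f _ (fun a b => 'X *+ (a == b)%N - (Nf x y kk a b)%:P)) /=.
ring.
Qed.
Definition PM (R : comNzRingType) (a : R) : {poly R} :=
  ('X^2 - 2 * 'X) ^+ 2 + (2 * a)%:P * ('X^2 - 2 * 'X) + 1.
Definition PN (R : comNzRingType) (a : R) : {poly R} :=
  'X^2 - (2 * a)%:P * 'X + 1.
Arguments PM {R}. Arguments PN {R}.

Lemma quad (a b : algC) : ('X - a%:P) * ('X - b%:P) = 'X^2 - (a + b)%:P * 'X + (a * b)%:P.
Proof. rewrite polyCD polyCM; ring. Qed.

Lemma gt1_sq (a : algC) : 0 <= a -> 1 < a ^+ 2 -> 1 < a.
Proof. by move=> a0; rewrite -{1}(expr1n _ 2) ltr_pXn2r // qualifE /=. Qed.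

Lemma eig_facts (x y k : nat) : (x * x = k * (y * y) + 1)%N -> (0 < y)%N -> (0 < k)%N ->
  exists L : seq algC,
    \prod_(r <- L) ('X - r%:P) = PM (x%:R : algC) * PN (x%:R : algC) /\
    count (fun z : algC => `|z| < 1) L = 2%N /\
    count (fun z : algC => 1 < `|z|) L = 4%N /\
    all (fun z : algC => `|z| != 1) L.
Proof.
move=> hxy hy hk.
have x0 : (0 < x)%N by case: x hxy => //=; rewrite addn1.
set X : algC := x%:R; set Y : algC := y%:R; set K : algC := k%:R.
have rel : X * X = K * (Y * Y) + 1.
  by move: (congr1 (fun n : nat => n%:R : algC) hxy); rewrite /= natrD !natrM.
have K0 : 0 < K by rewrite ltr0n.
have Y1 : 1 <= Y by rewrite ler1n.
have X1 : 1 <= X by rewrite ler1n.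
set s := sqrtC K.
have s2 : s ^+ 2 = K by rewrite sqrtCK.
have s0 : 0 < s by rewrite sqrtC_gt0.
set mu := X + Y * s; set mu' := X - Y * s.
have Pmu : mu * mu' = 1.
  have -> : mu * mu' = X * X - Y * Y * s ^+ 2 by rewrite /mu /mu'; ring.
  by rewrite s2 rel; ring.
have Smu : mu + mu' = 2 * X by rewrite /mu /mu'; ring.
have mu1 : 1 < mu.
  rewrite /mu -[1]addr0; apply: ler_ltD => //.
  by rewrite mulr_gt0 // (lt_le_trans ltr01).
have mu0 : 0 < mu by apply: lt_trans mu1.
have emu' : mu' = mu^-1.
  by apply: (mulfI (lt0r_neq0 mu0)); rewrite Pmu divff // lt0r_neq0.
have mu'0 : 0 < mu' by rewrite emu' invr_gt0.
have mu'1 : mu' < 1 by rewrite emu' invf_lt1.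
set t := sqrtC (mu - 1).
have t2 : t ^+ 2 = mu - 1 by rewrite sqrtCK.
have t0 : 0 <= t by rewrite sqrtC_ge0 subr_ge0 ltW.
have treal : t \is Num.real by rewrite ger0_real.
set v := sqrtC (1 - mu').
have v2 : v ^+ 2 = 1 - mu' by rewrite sqrtCK.
have v0 : 0 < v by rewrite sqrtC_gt0 subr_gt0.
have v1 : v < 1.
  have v1' : v ^+ 2 < 1 by rewrite v2 ltrBlDr ltrDl.
  by rewrite -(ltr_pXn2r (_ : 0 < 2)%N) ?expr1n // qualifE /= ?ltW.
have nz (z : algC) : z * z^* = mu -> 1 < `|z|.
  move=> hz; apply: gt1_sq => //; by rewrite normCK hz.
have n1 : 1 < `|1 + 'i * t|.
  apply: nz; rewrite rmorphD rmorphM /= conjCi (conj_Creal treal) ?rmorph1 ?conjC1.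
  transitivity (1 - ('i * 'i) * t ^+ 2); first ring.
  by rewrite mulCii t2; ring.
have n2 : 1 < `|1 - 'i * t|.
  apply: nz; rewrite rmorphB rmorphM /= conjCi (conj_Creal treal) ?rmorph1 ?conjC1.
  transitivity (1 - ('i * 'i) * t ^+ 2); first ring.
  by rewrite mulCii t2; ring.
have n3 : 1 < `|1 + v|.
  by rewrite ger0_norm ?ltrDl // addr_ge0 // ltW.
have n4 : `|1 - v| < 1.
  by rewrite ger0_norm ?subr_ge0 ?ltW // ltrBlDr ltrDl.
have n4' : 0 < `|1 - v| by rewrite normr_gt0 subr_eq0 eq_sym lt_eqF.
have n5 : 1 < `|mu| by rewrite ger0_norm ?ltW.
have n6 : `|mu'| < 1 by rewrite ger0_norm ?ltW.
exists [:: 1 + 'i * t; 1 - 'i * t; 1 + v; 1 - v; mu; mu'].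
split.
  transitivity ((('X - (1 + 'i * t)%:P) * ('X - (1 - 'i * t)%:P)) *
     (('X - (1 + v)%:P) * ('X - (1 - v)%:P)) * (('X - mu%:P) * ('X - mu'%:P))).
    by rewrite !big_cons big_nil mulr1 !mulrA.
  rewrite !quad.
  have -> : (1 + 'i * t) + (1 - 'i * t) = 2 by ring.
  have -> : (1 + 'i * t) * (1 - 'i * t) = mu.
    have -> : (1 + 'i * t) * (1 - 'i * t) = 1 - ('i * 'i) * t ^+ 2 by ring.
    by rewrite mulCii t2; ring.
  have -> : (1 + v) + (1 - v) = 2 by ring.
  have -> : (1 + v) * (1 - v) = mu'.
    have -> : (1 + v) * (1 - v) = 1 - v ^+ 2 by ring.
    by rewrite v2; ring.
  rewrite Smu Pmu /PM /PN.
  have -> : ('X^2 - (2 : algC)%:P * 'X + mu%:P) * ('X^2 - (2 : algC)%:P * 'X + mu'%:P)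
     = ('X^2 - 2 * 'X) ^+ 2 + (mu + mu')%:P * ('X^2 - 2 * 'X) + (mu * mu')%:P.
    rewrite polyCD polyCM; ring.
  rewrite Smu Pmu; ring.
split; last split.
- by rewrite /= n4 n6 (lt_gtF n1) (lt_gtF n2) (lt_gtF n3) (lt_gtF n5).
- by rewrite /= n1 n2 n3 n5 (lt_gtF n4) (lt_gtF n6).
- by rewrite /= (gt_eqF n1) (gt_eqF n2) (gt_eqF n3) (gt_eqF n5) (lt_eqF n4) (lt_eqF n6).
Qed.

Lemma map_PM (f : {rmorphism rat -> algC}) a : map_poly f (PM a) = PM (f a).
Proof.
rewrite /PM !(rmorphD, rmorphM, rmorphB, rmorphN, rmorphXn, rmorph1, rmorph_nat, map_polyC, map_polyX) /=.
rewrite !(map_polyX f) !(map_polyC f); ring.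
Qed.

Lemma map_PN (f : {rmorphism rat -> algC}) a : map_poly f (PN a) = PN (f a).
Proof.
rewrite /PN !(rmorphD, rmorphM, rmorphB, rmorphN, rmorphXn, rmorph1, rmorph_nat, map_polyC, map_polyX) /=.
rewrite !(map_polyX f) !(map_polyC f) ?rmorphM ?rmorph_nat; ring.
Qed.

Lemma nsq (k : nat) : (1 < k)%N -> squarefree k ->
  forall p q : nat, q <> 0%N -> (p * p <> k * (q * q))%N.
Proof.
move=> hk hsf p q hq E.
have pr : prime (pdiv k) := pdiv_prime hk.
have rk : (pdiv k %| k)%N := pdiv_dvd k.
have k0 : (0 < k)%N by apply: ltnW.
have q0 : (0 < q)%N by case: q hq E.
have p0 : (0 < p)%N.
  case: (posnP p) => // p00; rewrite p00 in E.
  have : (0 < k * (q * q))%N by rewrite !muln_gt0 k0 q0.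
  by rewrite -E.
have l1 : (0 < logn (pdiv k) k)%N by rewrite logn_gt0 mem_primes pr k0 rk.
have l2 : (logn (pdiv k) k < 2)%N.
  rewrite ltnNge -pfactor_dvdn //; apply/negP => H; apply: (negP (hsf _ pr)).
  by rewrite mulnn.
have := congr1 (logn (pdiv k)) E.
rewrite !lognM ?muln_gt0 ?k0 ?q0 ?p0 //.
lia.
Qed.

Lemma pO_mul (p q : {poly rat}) : p \is a polyOver Num.int -> q \is a polyOver Num.int ->
  p * q \is a polyOver Num.int.
Proof. exact: polyOver_mulr_2closed. Qed.
Lemma pO_add (p q : {poly rat}) : p \is a polyOver Num.int -> q \is a polyOver Num.int ->
  p + q \is a polyOver Num.int.
Proof.
move=> /polyOverP hp /polyOverP hq; apply/polyOverP => i; rewrite coefD; exact: rpredD.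
Qed.
Lemma pO_sub (p q : {poly rat}) : p \is a polyOver Num.int -> q \is a polyOver Num.int ->
  p - q \is a polyOver Num.int.
Proof.
move=> /polyOverP hp /polyOverP hq; apply/polyOverP => i; rewrite coefB; exact: rpredB.
Qed.
Lemma pO_opp (p : {poly rat}) : p \is a polyOver Num.int -> - p \is a polyOver Num.int.
Proof.
move=> /polyOverP hp; apply/polyOverP => i; by rewrite coefN rpredN.
Qed.
Lemma pO_X : ('X : {poly rat}) \is a polyOver Num.int.
Proof. exact: polyOverX. Qed.
Lemma pO_C (c : rat) : c \is a Num.int -> c%:P \is a polyOver Num.int.
Proof. by rewrite polyOverC. Qed.
Lemma pO_nat n : (n%:R : {poly rat}) \is a polyOver Num.int.
Proof. by rewrite -polyC_natr polyOverC natr_int. Qed.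
Lemma pO_1 : (1 : {poly rat}) \is a polyOver Num.int.
Proof. by rewrite -polyC1 polyOverC. Qed.

Theorem proposition3p2 (k : nat) (hk : (1 < k)%N) (hsf : squarefree k) :
  exists A : 'M[rat]_6,
    is_nk_automorphism k A /\ anosov A /\ has_signature A 2 4.
Proof.
have [x [y [hxy hy]]] : exists x y : nat, (x * x = k * (y * y) + 1)%N /\ y <> 0%N.
  apply: PellM.pell_nat; first by lia.
  exact: nsq.
have y0 : (0 < y)%N by case: y hy {hxy}.
have k0 : (0 < k)%N by apply: ltnW.
set X : rat := x%:R; set Y : rat := y%:R; set K : rat := k%:R.
have rel : X ^+ 2 - K * Y ^+ 2 = 1.
  have e := congr1 (fun n : nat => n%:R : rat) hxy; rewrite /= natrD !natrM in e.
  by rewrite /X /Y /K !expr2 e; ring.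
have charA : char_poly (Amx X Y K) = PM X * PN X.
  rewrite /char_poly char_block_diag_mx det_ublock.
  have := charM X Y K; rewrite /char_poly => ->.
  have := charN X Y K; rewrite /char_poly => ->.
  by rewrite rel /PM /PN.
have detA : \det (Amx X Y K) = 1.
  have := char_poly_det (Amx X Y K).
  rewrite charA -horner_coef0 /PM /PN !hornerE.
  by move=> <-.
have [L [HL [Hc1 [Hc2 Hall]]]] := eig_facts x y k hxy y0 k0.
have Hperm : perm_eq (eigenvalues (Amx X Y K)) L.
  rewrite /eigenvalues; case: closed_field_poly_normal => rs /= Hrs.
  have hmon : map_poly (ratr : rat -> algC) (char_poly (Amx X Y K)) \is monic.
    by rewrite map_monic char_poly_monic.
  rewrite (monicP hmon) scale1r in Hrs.
  apply: prod_XsubC_eq; rewrite -Hrs HL charA rmorphM /= map_PM map_PN.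
  by rewrite /X rmorph_nat.
exists (Amx X Y K); split; [split|split].
- by rewrite unitmxE detA unitr1.
- by apply: aut_gen => a b ha hb; rewrite AE.
- split.
  + move=> z zin; have zL : z \in L by rewrite -(perm_mem Hperm).
    exact: (allP Hall z zL).
  + split; last by left.
    rewrite charA /PM /PN.
    rewrite !expr2.
    repeat first [ apply: pO_mul | apply: pO_add | apply: pO_sub | apply: pO_opp | apply: pO_X
                 | apply: pO_1 | apply: pO_nat | apply: pO_C | apply: rpredM
                 | apply: natr_int ].
- rewrite /has_signature; left; move/permP: Hperm => Hc; rewrite /n_contracting /n_expanding !Hc; split; assumption.
Qed.
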